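(* Let $(p_0,\dots,p_{n-1})$ be a closed discrete curve with $l_k=l_0$ and $\theta_k=\theta_0\in(-\pi,\pi)$ for all $k$, and let $\kappa=2\tan(\theta_0/2)/l_0$ (so the curve is an equilibrium of $L+\kappa\mathrm{Vol}$). Let $p(t)$, $t\in(-\varepsilon,\varepsilon)$, be a $C^2$ family of closed discrete curves with $p(0)=p$, $\mathrm{Vol}(p(t))$ constant, and $p_k'(0)=\psi_kN_k+\eta_kT_k$ for real $\psi_k,\eta_k$. Then \[ \frac{d^2}{dt^2}\Big|_{t=0}L(p(t))=\sum_k\Big[|\nabla\psi_k|^2-\kappa^2\psi_k\psi_{k+1}+\tan^2\frac{\theta_0}{2}\Big(\kappa\,\nabla\psi_k(\eta_{k+1}+\eta_k)+|\nabla\eta_k|^2\Big)\Big]l_0 . \] In particular, if $\eta_k=0$ for all $k$ (normal variation), then \[ \frac{d^2}{dt^2}\Big|_{t=0}L(p(t))=\sum_k\big(|\nabla\psi_k|^2-\kappa^2\psi_k\psi_{k+1}\big)l_0=-\sum_k\psi_k\big(\Delta\psi_k+\kappa^2\psi_{k+1}\big)l_0 . \]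
   Context: A closed discrete curve is an $n$-tuple $(p_0,\dots,p_{n-1})$ of points of $\mathbb{R}^2$ ($n\ge3$), indices modulo $n$, with $l_k:=|p_{k+1}-p_k|\ne0$ for all $k$. $R_\varphi$ denotes rotation of $\mathbb{R}^2$ by $\varphi$. Fix $R\in\{R_{\pi/2},R_{-\pi/2}\}$ and set $\sigma=+1$ if $R=R_{\pi/2}$, $\sigma=-1$ if $R=R_{-\pi/2}$. Edge normal $\nu_k:=R((p_{k+1}-p_k)/l_k)$. The signed angle $\theta_k\in(-\pi,\pi]$ at vertex $p_k$ is defined by $\nu_k=R_{\sigma\theta_k}\nu_{k-1}$. When $\theta_k\ne\pi$, the vertex normal is $N_k:=\dfrac{\nu_k+\nu_{k-1}}{1+\cos\theta_k}$ and the vertex tangent is $T_k:=-RN_k$. Length $L=\sum_k l_k$, area $\mathrm{Vol}=\frac12\sum_k\langle p_k,\nu_k\rangle l_k$. Discrete gradient $\nabla\psi_k:=(\psi_{k+1}-\psi_k)/l_0$ and discrete Laplacian $\Delta\psi_k:=(\nabla\psi_k-\nabla\psi_{k-1})/l_0=(\psi_{k+1}-2\psi_k+\psi_{k-1})/l_0^2$. *)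

(* Defs.v *)
From Stdlib Require Import Reals Lra List Arith.
From Coquelicot Require Import Coquelicot.
Open Scope R_scope.

Definition pt := (R * R)%type.
Definition padd (a b : pt) : pt := (fst a + fst b, snd a + snd b).
Definition psub (a b : pt) : pt := (fst a - fst b, snd a - snd b).
Definition pscal (c : R) (a : pt) : pt := (c * fst a, c * snd a).
Definition pdot (a b : pt) : R := fst a * fst b + snd a * snd b.
Definition pnorm (a : pt) : R := sqrt (pdot a a).
Definition rot (phi : R) (a : pt) : pt :=
  (cos phi * fst a - sin phi * snd a, sin phi * fst a + cos phi * snd a).

Definition fsum (n : nat) (f : nat -> R) : R :=
  fold_right Rplus 0 (map f (seq 0 n)).

(* A discrete curve is c : nat -> pt, of which only c 0 .. c (n-1) matter;
   all indices are taken modulo n. *)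
Definition next (n k : nat) : nat := (S k) mod n.
Definition prev (n k : nat) : nat := (k + n - 1) mod n.

Definition edge (n : nat) (c : nat -> pt) (k : nat) : pt :=
  psub (c (next n k)) (c (k mod n)).
Definition len (n : nat) (c : nat -> pt) (k : nat) : R := pnorm (edge n c k).

(* The fixed rotation R = R_{sigma pi/2}, sigma in {1,-1}. *)
Definition Jrot (sigma : R) : pt -> pt := rot (sigma * (PI / 2)).

Definition nu (sigma : R) (n : nat) (c : nat -> pt) (k : nat) : pt :=
  Jrot sigma (pscal (/ len n c k) (edge n c k)).

Definition closed_curve (n : nat) (c : nat -> pt) : Prop :=
  (3 <= n)%nat /\ forall k, (k < n)%nat -> len n c k <> 0.

Definition is_signed_angle (sigma : R) (n : nat) (c : nat -> pt) (k : nat)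
  (th : R) : Prop :=
  - PI < th <= PI /\ nu sigma n c k = rot (sigma * th) (nu sigma n c (prev n k)).

Definition vnormal (sigma : R) (n : nat) (c : nat -> pt) (th : R) (k : nat) : pt :=
  pscal (/ (1 + cos th)) (padd (nu sigma n c k) (nu sigma n c (prev n k))).
Definition vtangent (sigma : R) (n : nat) (c : nat -> pt) (th : R) (k : nat) : pt :=
  pscal (-1) (Jrot sigma (vnormal sigma n c th k)).

Definition Length (n : nat) (c : nat -> pt) : R := fsum n (len n c).
Definition Vol (sigma : R) (n : nat) (c : nat -> pt) : R :=
  / 2 * fsum n (fun k => pdot (c k) (nu sigma n c k) * len n c k).

Definition dgrad (n : nat) (l0 : R) (psi : nat -> R) (k : nat) : R :=
  (psi (next n k) - psi (k mod n)) / l0.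
Definition dlap (n : nat) (l0 : R) (psi : nat -> R) (k : nat) : R :=
  (dgrad n l0 psi k - dgrad n l0 psi (prev n k)) / l0.

Definition C2_on (eps : R) (f : R -> R) : Prop :=
  forall t, - eps < t < eps ->
    ex_derive f t /\ ex_derive_n f 2 t /\ continuous (Derive_n f 2) t.

(* Main.v *)
Require Import Defs.
From Stdlib Require Import Reals List Arith Lra Lia.
From Coquelicot Require Import Coquelicot.
Open Scope R_scope.

Lemma fsum_S n f : fsum (S n) f = fsum n f + f n.
Proof.
unfold fsum. rewrite seq_S, map_app, fold_right_app. simpl.
generalize (f n). induction (map f (seq 0 n)); intros x; simpl; [lra|]. rewrite IHl. lra.
Qed.

Lemma fsum_shift n f : fsum (S n) f = f 0%nat + fsum n (fun k => f (S k)).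
Proof.
unfold fsum. simpl. f_equal. rewrite <- seq_shift, map_map. reflexivity.
Qed.

Lemma fsum_ext n f g : (forall k, (k < n)%nat -> f k = g k) -> fsum n f = fsum n g.
Proof.
induction n; intros H; [reflexivity|]. rewrite !fsum_S, IHn by (intros; apply H; lia).
rewrite H by lia. reflexivity.
Qed.

Lemma fsum_plus n f g : fsum n (fun k => f k + g k) = fsum n f + fsum n g.
Proof. induction n; [unfold fsum; simpl; lra|]. rewrite !fsum_S, IHn. lra. Qed.

Lemma fsum_scal n c f : fsum n (fun k => c * f k) = c * fsum n f.
Proof. induction n; [unfold fsum; simpl; lra|]. rewrite !fsum_S, IHn. lra. Qed.

Lemma fsum_zero n f : (forall k, (k < n)%nat -> f k = 0) -> fsum n f = 0.
Proof. induction n; intros H; [unfold fsum; simpl; lra|]. rewrite fsum_S, IHn by (intros; apply H; lia). rewrite H by lia. lra. Qed.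

Lemma mod_small' a n : (a < n)%nat -> (a mod n = a)%nat.
Proof. apply Nat.mod_small. Qed.

Lemma next_lt n k : (0 < n)%nat -> (next n k < n)%nat.
Proof. intros; unfold next; apply Nat.mod_upper_bound; lia. Qed.
Lemma prev_lt n k : (0 < n)%nat -> (prev n k < n)%nat.
Proof. intros; unfold prev; apply Nat.mod_upper_bound; lia. Qed.

Lemma next_val n k : (k < n)%nat -> (next n k = if Nat.eqb (S k) n then 0 else S k)%nat.
Proof.
intros H. unfold next. destruct (Nat.eqb_spec (S k) n).
- subst. apply Nat.mod_same; lia.
- apply Nat.mod_small; lia.
Qed.

Lemma prev_next n k : (k < n)%nat -> prev n (next n k) = k.
Proof.
intros H. rewrite next_val by auto. unfold prev. destruct (Nat.eqb_spec (S k) n).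
- simpl. replace (n - 0)%nat with (S k) by lia. rewrite <- e. replace (S k - 1)%nat with k by lia. apply Nat.mod_small; lia.
- replace (S k + n - 1)%nat with (k + 1 * n)%nat by lia. rewrite Nat.mod_add by lia.
  apply Nat.mod_small; lia.
Qed.

Lemma next_prev n k : (k < n)%nat -> next n (prev n k) = k.
Proof.
intros H. unfold prev, next. destruct k.
- replace (0 + n - 1)%nat with (n - 1)%nat by lia. rewrite (Nat.mod_small (n-1)) by lia.
  replace (S (n-1)) with n by lia. apply Nat.mod_same; lia.
- replace (S k + n - 1)%nat with (k + 1 * n)%nat by lia. rewrite Nat.mod_add by lia.
  rewrite (Nat.mod_small k) by lia. apply Nat.mod_small; lia.
Qed.

Lemma fsum_next n g : (0 < n)%nat -> fsum n (fun k => g (next n k)) = fsum n g.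
Proof.
intros Hn. destruct n as [|m]; [lia|].
rewrite fsum_S, (fsum_shift m g).
rewrite (fsum_ext m (fun k => g (next (S m) k)) (fun k => g (S k))).
- rewrite next_val by lia. rewrite Nat.eqb_refl. lra.
- intros k Hk. rewrite next_val by lia. destruct (Nat.eqb_spec (S k) (S m)); [lia|auto].
Qed.

Lemma is_derive_fsum (f : nat -> R -> R) (df : nat -> R) n x :
  (forall k, (k < n)%nat -> is_derive (f k) x (df k)) ->
  is_derive (fun t => fsum n (fun k => f k t)) x (fsum n df).
Proof.
induction n; intros H.
- simpl. apply (is_derive_const (K:=R_AbsRing) (V:=R_NormedModule) 0 x).
- apply (is_derive_ext (K:=R_AbsRing) (V:=R_NormedModule) (fun t => fsum n (fun k => f k t) + f n t)). { intros t. rewrite fsum_S. reflexivity. }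
  rewrite fsum_S. apply (is_derive_plus (K:=R_AbsRing) (V:=R_NormedModule)).
  + apply IHn. intros; apply H; lia.
  + apply H; lia.
Qed.

Lemma isd_eq (f : R -> R) (x a b : R) : is_derive f x a -> a = b -> is_derive f x b.
Proof. intros H ->; auto. Qed.

Lemma isd_plus (f g : R -> R) (x df dg : R) : is_derive f x df -> is_derive g x dg -> is_derive (fun t => f t + g t) x (df + dg).
Proof. intros; apply (is_derive_plus (K:=R_AbsRing) (V:=R_NormedModule)); auto. Qed.
Lemma isd_minus (f g : R -> R) (x df dg : R) : is_derive f x df -> is_derive g x dg -> is_derive (fun t => f t - g t) x (df - dg).
Proof. intros; apply (is_derive_minus (K:=R_AbsRing) (V:=R_NormedModule)); auto. Qed.
Lemma isd_mult (f g : R -> R) (x df dg : R) : is_derive f x df -> is_derive g x dg -> is_derive (fun t => f t * g t) x (df * g x + f x * dg).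
Proof. intros; apply (is_derive_mult (K:=R_AbsRing)); auto. intros; apply Rmult_comm. Qed.

Lemma loc_int eps : 0 < eps -> locally 0 (fun t => - eps < t < eps).
Proof.
intros He. exists (mkposreal eps He). intros y Hy.
change (Rabs (y - 0) < eps) in Hy. rewrite Rminus_0_r in Hy.
apply Rabs_def2 in Hy. lra.
Qed.

Lemma loc_int_t eps t : - eps < t < eps -> locally t (fun s => - eps < s < eps).
Proof.
intros He. assert (Hd : 0 < Rmin (t + eps) (eps - t)) by (apply Rmin_pos; lra).
exists (mkposreal _ Hd). intros y Hy.
change (Rabs (y - t) < Rmin (t + eps) (eps - t)) in Hy.
apply Rabs_def2 in Hy. destruct Hy as [H1 H2].
assert (Rmin (t + eps) (eps - t) <= t + eps) by apply Rmin_l.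
assert (Rmin (t + eps) (eps - t) <= eps - t) by apply Rmin_r. lra.
Qed.


Lemma Jcs sg : (sg = 1 \/ sg = -1) -> cos (sg*(PI/2)) = 0 /\ sin (sg*(PI/2)) = sg.
Proof.
intros [-> | ->].
- rewrite Rmult_1_l, cos_PI2, sin_PI2. auto.
- replace (-1*(PI/2)) with (-(PI/2)) by ring. rewrite cos_neg, sin_neg, cos_PI2, sin_PI2. auto.
Qed.

Lemma sgcs sg x : (sg = 1 \/ sg = -1) -> cos (sg*x) = cos x /\ sin (sg*x) = sg * sin x.
Proof.
intros [-> | ->].
- rewrite !Rmult_1_l. auto.
- replace (-1*x) with (-x) by ring. rewrite cos_neg, sin_neg. split; ring.
Qed.

Lemma half th : - PI < th < PI ->
  0 < cos (th/2) /\ cos th = 2 * cos (th/2) * cos (th/2) - 1 /\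
  sin th = 2 * sin (th/2) * cos (th/2) /\ tan (th/2) = sin (th/2) / cos (th/2) /\
  sin (th/2) * sin (th/2) + cos (th/2) * cos (th/2) = 1.
Proof.
intros H. split; [apply cos_gt_0; lra|].
assert (E : th = 2 * (th/2)) by field.
assert (Ec : cos th = cos (2*(th/2))) by (rewrite <- E; auto).
assert (Es : sin th = sin (2*(th/2))) by (rewrite <- E; auto).
rewrite Ec, Es, cos_2a_cos, sin_2a. repeat split; try ring.
all: try (unfold tan; reflexivity).
pose proof (sin2_cos2 (th/2)). unfold Rsqr in H0. lra.
Qed.

Lemma len_eq c n k : (k < n)%nat -> len n c k =
  sqrt ((fst (c (next n k)) - fst (c k)) * (fst (c (next n k)) - fst (c k)) +
        (snd (c (next n k)) - snd (c k)) * (snd (c (next n k)) - snd (c k))).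
Proof. intros H. unfold len, pnorm, pdot, edge, psub. simpl. rewrite Nat.mod_small by auto. reflexivity. Qed.

Lemma edge_eq c n k : (k < n)%nat -> edge n c k = (fst (c (next n k)) - fst (c k), snd (c (next n k)) - snd (c k)).
Proof. intros H. unfold edge, psub. rewrite Nat.mod_small by auto. reflexivity. Qed.

Lemma nu_comp sg n c k l0 : (k < n)%nat -> (sg = 1 \/ sg = -1) -> len n c k = l0 -> l0 <> 0 ->
  nu sg n c k = (-sg * snd (edge n c k) / l0, sg * fst (edge n c k) / l0).
Proof.
intros Hk Hs Hl Hl0. unfold nu, Jrot, rot, pscal. destruct (Jcs sg Hs) as [Hc Hsn].
rewrite Hc, Hsn, Hl. simpl. f_equal; field; auto.
Qed.

Lemma vol_eq sg n c : (sg = 1 \/ sg = -1) -> (forall k, (k < n)%nat -> len n c k <> 0) ->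
  Vol sg n c = sg / 2 * fsum n (fun k => snd (c k) * fst (c (next n k)) - fst (c k) * snd (c (next n k))).
Proof.
intros Hs Hl. unfold Vol.
rewrite (fsum_ext n _ (fun k => sg * (snd (c k) * fst (c (next n k)) - fst (c k) * snd (c (next n k))))).
{ rewrite fsum_scal. field. } intros k Hk. unfold nu, Jrot, rot, pscal, pdot.
destruct (Jcs sg Hs) as [Hc Hsn]. rewrite Hc, Hsn. rewrite edge_eq by auto. simpl.
field. apply Hl; auto.
Qed.

Lemma rot_inv c s ax ay bx by' : c*c+s*s = 1 -> (ax, ay) = (c*bx - s*by', s*bx + c*by') ->
  bx = c*ax + s*ay /\ by' = -s*ax + c*ay.
Proof. intros H E. injection E as E1 E2. subst. split.
- replace bx with (bx*(c*c+s*s)) at 1 by (rewrite H; ring). ring.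
- replace by' with (by'*(c*c+s*s)) at 1 by (rewrite H; ring). ring. Qed.


Lemma edge_d1 (x1 x0 y1 y0 : R -> R) t a1 a0 b1 b0 :
 is_derive x1 t a1 -> is_derive x0 t a0 -> is_derive y1 t b1 -> is_derive y0 t b0 ->
 0 < (x1 t - x0 t)*(x1 t - x0 t) + (y1 t - y0 t)*(y1 t - y0 t) ->
 is_derive (fun s => sqrt ((x1 s - x0 s)*(x1 s - x0 s) + (y1 s - y0 s)*(y1 s - y0 s))) t
   (((x1 t - x0 t)*(a1-a0) + (y1 t - y0 t)*(b1-b0)) /
     sqrt ((x1 t - x0 t)*(x1 t - x0 t) + (y1 t - y0 t)*(y1 t - y0 t))).
Proof.
intros H1 H0 G1 G0 Hq.
eapply isd_eq.
- apply (is_derive_sqrt (fun s => (x1 s - x0 s)*(x1 s - x0 s) + (y1 s - y0 s)*(y1 s - y0 s))); [|exact Hq].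
  apply isd_plus; apply isd_mult; apply isd_minus; eauto.
- assert (0 < sqrt ((x1 t - x0 t)*(x1 t - x0 t) + (y1 t - y0 t)*(y1 t - y0 t))) by (apply sqrt_lt_R0; auto).
  cbv beta. field. lra.
Qed.

Lemma edge_d2 (x1 x0 y1 y0 u1 u0 w1 w0 : R -> R) t a1 a0 b1 b0 c1 c0 d1 d0 :
 is_derive x1 t a1 -> is_derive x0 t a0 -> is_derive y1 t b1 -> is_derive y0 t b0 ->
 is_derive u1 t c1 -> is_derive u0 t c0 -> is_derive w1 t d1 -> is_derive w0 t d0 ->
 0 < (x1 t - x0 t)*(x1 t - x0 t) + (y1 t - y0 t)*(y1 t - y0 t) ->
 is_derive (fun s => ((x1 s - x0 s)*(u1 s - u0 s) + (y1 s - y0 s)*(w1 s - w0 s)) /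
     sqrt ((x1 s - x0 s)*(x1 s - x0 s) + (y1 s - y0 s)*(y1 s - y0 s))) t
   (((a1-a0)*(u1 t - u0 t) + (x1 t - x0 t)*(c1-c0) + (b1-b0)*(w1 t - w0 t) + (y1 t - y0 t)*(d1-d0))
      / sqrt ((x1 t - x0 t)*(x1 t - x0 t) + (y1 t - y0 t)*(y1 t - y0 t))
    - ((x1 t - x0 t)*(u1 t - u0 t) + (y1 t - y0 t)*(w1 t - w0 t))
      * ((x1 t - x0 t)*(a1-a0) + (y1 t - y0 t)*(b1-b0))
      / (sqrt ((x1 t - x0 t)*(x1 t - x0 t) + (y1 t - y0 t)*(y1 t - y0 t)))^3).
Proof.
intros H1 H0 G1 G0 K1 K0 L1 L0 Hq.
assert (Hs : 0 < sqrt ((x1 t - x0 t)*(x1 t - x0 t) + (y1 t - y0 t)*(y1 t - y0 t))) by (apply sqrt_lt_R0; auto).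
eapply isd_eq.
- apply is_derive_div.
  + apply isd_plus; apply isd_mult; apply isd_minus; eauto.
  + apply edge_d1; eauto.
  + lra.
- cbv beta. field. lra.
Qed.

Lemma vol_d1 (x0 y0 x1 y1 : R -> R) t a0 b0 a1 b1 :
 is_derive x0 t a0 -> is_derive y0 t b0 -> is_derive x1 t a1 -> is_derive y1 t b1 ->
 is_derive (fun s => y0 s * x1 s - x0 s * y1 s) t (b0 * x1 t + y0 t * a1 - (a0 * y1 t + x0 t * b1)).
Proof. intros. apply isd_minus; apply isd_mult; auto. Qed.

Lemma vol_d2 (x0 y0 x1 y1 u0 v0 u1 v1 : R -> R) t a0 b0 a1 b1 c0 d0 c1 d1 :
 is_derive x0 t a0 -> is_derive y0 t b0 -> is_derive x1 t a1 -> is_derive y1 t b1 ->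
 is_derive u0 t c0 -> is_derive v0 t d0 -> is_derive u1 t c1 -> is_derive v1 t d1 ->
 is_derive (fun s => v0 s * x1 s + y0 s * u1 s - (u0 s * y1 s + x0 s * v1 s)) t
  (d0 * x1 t + v0 t * a1 + (b0 * u1 t + y0 t * c1) - (c0 * y1 t + u0 t * b1 + (a0 * v1 t + x0 t * d1))).
Proof. intros. apply isd_minus; apply isd_plus; apply isd_mult; auto. Qed.


Lemma Vform sg n p l0 th0 psi eta k :
 (sg = 1 \/ sg = -1) -> (3 <= n)%nat -> (k < n)%nat -> (forall j, (j < n)%nat -> len n p j = l0) ->
 l0 <> 0 -> - PI < th0 < PI ->
 (forall j, (j < n)%nat -> is_signed_angle sg n p j th0) ->
 let t := sin (th0/2) / cos (th0/2) in
 let a := fst (edge n p k) / l0 in let b := snd (edge n p k) / l0 in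
 let V := fun j => padd (pscal (psi j) (vnormal sg n p th0 j)) (pscal (eta j) (vtangent sg n p th0 j)) in
 fst (V k) = (t*psi k + eta k)*a - (sg*(psi k - t*eta k))*b /\
 snd (V k) = (t*psi k + eta k)*b + (sg*(psi k - t*eta k))*a /\
 fst (V (next n k)) = (-t*psi (next n k) + eta (next n k))*a - (sg*(psi (next n k) + t*eta (next n k)))*b /\
 snd (V (next n k)) = (-t*psi (next n k) + eta (next n k))*b + (sg*(psi (next n k) + t*eta (next n k)))*a /\
 (fst (edge n p (prev n k)) - l0*a)/l0 - (2*t/l0)*sg/2*(l0*b + snd (edge n p (prev n k))) = 0 /\
 (snd (edge n p (prev n k)) - l0*b)/l0 + (2*t/l0)*sg/2*(l0*a + fst (edge n p (prev n k))) = 0.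
Proof.
intros Hsg Hn Hk Hlen Hl0 Hth Hang t a b V.
destruct (half th0 Hth) as [HC [Hc [Hs [Ht HSC]]]].
destruct (Jcs sg Hsg) as [Jc Js]. destruct (sgcs sg th0 Hsg) as [Cc Cs].
assert (Hn0 : (0 < n)%nat) by lia.
assert (Hpk := prev_lt n k Hn0). assert (Hnk := next_lt n k Hn0).
destruct (Hang k Hk) as [_ Ak].
destruct (Hang (next n k) Hnk) as [_ An]. rewrite prev_next in An by auto.
pose proof (nu_comp sg n p k l0 Hk Hsg (Hlen k Hk) Hl0) as Nk.
pose proof (nu_comp sg n p (prev n k) l0 Hpk Hsg (Hlen _ Hpk) Hl0) as Np.
destruct (edge n p k) as [ex ey] eqn:Ek.
destruct (edge n p (prev n k)) as [epx epy] eqn:Epv.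
rewrite Nk in Ak, An. rewrite Np in Ak.
unfold V, vtangent, vnormal, Jrot, pscal, padd. unfold rot in *. rewrite Jc, Js.
rewrite Cc, Cs in Ak, An.
rewrite prev_next by auto. rewrite Nk, An. rewrite (nu_comp sg n p (prev n k) l0 Hpk Hsg (Hlen _ Hpk) Hl0), Epv.
cbn [fst snd] in *.
set (C := cos (th0/2)) in *. set (S := sin (th0/2)) in *.
assert (Hcs : cos th0 * cos th0 + sg * sin th0 * (sg * sin th0) = 1).
{ pose proof (sin2_cos2 th0). unfold Rsqr in H. destruct Hsg as [-> | ->]; lra. }
destruct (rot_inv _ _ _ _ _ _ Hcs Ak) as [P1 P2].
rewrite Hc, Hs in *.
assert (EX : epx = (2*C*C-1)*ex + sg*(2*S*C)*ey).
{ replace epx with (sg * l0 * (sg * epx / l0)) by (destruct Hsg as [-> | ->]; field; auto).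
  rewrite P2. destruct Hsg as [-> | ->]; field; auto. }
assert (EY : epy = (2*C*C-1)*ey - sg*(2*S*C)*ex).
{ replace epy with (- sg * l0 * (- sg * epy / l0)) by (destruct Hsg as [-> | ->]; field; auto).
  rewrite P1. destruct Hsg as [-> | ->]; field; auto. }
subst epx epy. unfold a, b, t.
assert (HC2 : S^2 = 1 - C^2) by nra.
assert (HC0 : C <> 0) by lra.
destruct Hsg as [-> | ->]; repeat split.
all: try (field; repeat split; auto; nra).
all: field_simplify; [| repeat split; auto].
all: replace (S^2) with (1 - C^2) by nra; apply Rmult_eq_0_compat_r; ring.
Qed.


Lemma fsum_minus n f g : fsum n (fun k => f k - g k) = fsum n f - fsum n g.
Proof. induction n; [unfold fsum; simpl; lra|]. rewrite !fsum_S, IHn. lra. Qed.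

Lemma fsum_opp n f : fsum n (fun k => - f k) = - fsum n f.
Proof. induction n; [unfold fsum; simpl; lra|]. rewrite !fsum_S, IHn. lra. Qed.

Lemma fsum_tele n g : (0 < n)%nat -> fsum n (fun k => g (next n k) - g k) = 0.
Proof. intros H. rewrite fsum_minus, fsum_next by auto. lra. Qed.

Lemma part2 n l0 psi eta kappa T : (forall k, (k < n)%nat -> eta k = 0) -> (0 < n)%nat ->
 fsum n (fun k => ((dgrad n l0 psi k)^2 - kappa^2*psi k*psi (next n k)
       + T^2 * (kappa * dgrad n l0 psi k * (eta (next n k) + eta k) + (dgrad n l0 eta k)^2)) * l0)
 = fsum n (fun k => ((dgrad n l0 psi k)^2 - kappa^2*psi k*psi (next n k)) * l0).
Proof.
intros He Hn. apply fsum_ext. intros k Hk. unfold dgrad.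
rewrite Nat.mod_small by auto. rewrite (He k Hk), (He (next n k) (next_lt n k Hn)).
replace ((0 - 0) / l0) with 0 by (unfold Rdiv; ring). ring.
Qed.

Lemma part3 n l0 psi kappa : (0 < n)%nat -> l0 <> 0 ->
 fsum n (fun k => ((dgrad n l0 psi k)^2 - kappa^2*psi k*psi (next n k)) * l0)
 = - fsum n (fun k => psi k * (dlap n l0 psi k + kappa^2 * psi (next n k)) * l0).
Proof.
intros Hn Hl.
set (h := fun j => psi j * dgrad n l0 psi (prev n j)).
rewrite (fsum_ext n _ (fun k => (- (psi k * (dlap n l0 psi k + kappa^2 * psi (next n k)) * l0))
     + (h (next n k) - h k))).
{ rewrite fsum_plus, fsum_tele by auto. rewrite fsum_opp. ring. }
intros k Hk. unfold h. rewrite prev_next by auto. unfold dlap, dgrad.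
rewrite (Nat.mod_small k) by auto. field. auto.
Qed.

Lemma Hcore (a b p q p1 q1 l0 K : R) :
  a*a+b*b=1 -> l0<>0 ->
  ((p1*a-q1*b-(p*a-q*b))^2+(p1*b+q1*a-(p*b+q*a))^2)/l0
  - ((l0*a)*(p1*a-q1*b-(p*a-q*b))+(l0*b)*(p1*b+q1*a-(p*b+q*a)))^2/l0^3
  + K*((p*b+q*a)*(p1*a-q1*b)-(p*a-q*b)*(p1*b+q1*a))
  = (q1-q)^2/l0 + K*(q*p1-p*q1).
Proof.
intros Hab Hl.
replace ((p1*a-q1*b-(p*a-q*b))^2+(p1*b+q1*a-(p*b+q*a))^2) with (((p1-p)^2+(q1-q)^2)*(a*a+b*b)) by ring.
replace ((l0*a)*(p1*a-q1*b-(p*a-q*b))+(l0*b)*(p1*b+q1*a-(p*b+q*a))) with (l0*(p1-p)*(a*a+b*b)) by ring.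
replace ((p*b+q*a)*(p1*a-q1*b)-(p*a-q*b)*(p1*b+q1*a)) with ((q*p1-p*q1)*(a*a+b*b)) by ring.
rewrite Hab. field. auto.
Qed.

Lemma Score (sg l0 t ps et ps1 et1 : R) : (sg = 1 \/ sg = -1) -> l0 <> 0 ->
  let p := t*ps+et in let q := sg*(ps-t*et) in let p1 := -t*ps1+et1 in let q1 := sg*(ps1+t*et1) in
  let ka := 2*t/l0 in
  (q1-q)^2/l0 + ka*sg*(q*p1-p*q1) =
  (((ps1-ps)/l0)^2 - ka^2*ps*ps1 + t^2*(ka*((ps1-ps)/l0)*(et1+et) + ((et1-et)/l0)^2))*l0
    + 2*t*(1-t^2)/l0*(ps1*et1-ps*et).
Proof. intros [->| ->] Hl; intros; unfold p,q,p1,q1,ka; field; auto. Qed.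



Definition Xf (P : R -> nat -> pt) k := fun t => fst (P t k).
Definition Yf (P : R -> nat -> pt) k := fun t => snd (P t k).
Definition DXf P k := fun t => Derive (Xf P k) t.
Definition DYf P k := fun t => Derive (Yf P k) t.
Definition Qf P n k t := (Xf P (next n k) t - Xf P k t) * (Xf P (next n k) t - Xf P k t)
  + (Yf P (next n k) t - Yf P k t) * (Yf P (next n k) t - Yf P k t).

Theorem mainTheorem15
  (sigma : R) (n : nat) (p : nat -> pt) (l0 th0 kappa : R)
  (P : R -> nat -> pt) (eps : R) (psi eta : nat -> R) :
  (sigma = 1 \/ sigma = -1) ->
  closed_curve n p ->
  (forall k, (k < n)%nat -> len n p k = l0) ->
  - PI < th0 < PI ->
  (forall k, (k < n)%nat -> is_signed_angle sigma n p k th0) ->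
  kappa = 2 * tan (th0 / 2) / l0 ->
  0 < eps ->
  (forall t, - eps < t < eps -> closed_curve n (P t)) ->
  (forall k, (k < n)%nat ->
     C2_on eps (fun t => fst (P t k)) /\ C2_on eps (fun t => snd (P t k))) ->
  (forall k, (k < n)%nat -> P 0 k = p k) ->
  (forall t, - eps < t < eps -> Vol sigma n (P t) = Vol sigma n (P 0)) ->
  (forall k, (k < n)%nat ->
     Derive (fun t => fst (P t k)) 0 =
       fst (padd (pscal (psi k) (vnormal sigma n p th0 k))
                 (pscal (eta k) (vtangent sigma n p th0 k))) /\
     Derive (fun t => snd (P t k)) 0 =
       snd (padd (pscal (psi k) (vnormal sigma n p th0 k))
                 (pscal (eta k) (vtangent sigma n p th0 k)))) ->
  Derive_n (fun t => Length n (P t)) 2 0 =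
    fsum n (fun k =>
      ((dgrad n l0 psi k) ^ 2 - kappa ^ 2 * psi k * psi (next n k)
       + (tan (th0 / 2)) ^ 2 *
           (kappa * dgrad n l0 psi k * (eta (next n k) + eta k)
            + (dgrad n l0 eta k) ^ 2)) * l0)
  /\
  ((forall k, (k < n)%nat -> eta k = 0) ->
     Derive_n (fun t => Length n (P t)) 2 0 =
       fsum n (fun k =>
         ((dgrad n l0 psi k) ^ 2 - kappa ^ 2 * psi k * psi (next n k)) * l0)
     /\
     Derive_n (fun t => Length n (P t)) 2 0 =
       - fsum n (fun k =>
           psi k * (dlap n l0 psi k + kappa ^ 2 * psi (next n k)) * l0)).
Proof.
intros Hsg Hcc Hlen Hth Hang Hka Heps Hcct HC2 HP0 HVol Hder.
destruct Hcc as [Hn Hlnz].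
assert (Hn0 : (0 < n)%nat) by lia.
assert (Hl0 : 0 < l0).
{ rewrite <- (Hlen 0%nat Hn0). pose proof (Hlnz 0%nat Hn0). unfold len, pnorm in *.
  pose proof (sqrt_pos (pdot (edge n p 0) (edge n p 0))).
  destruct (Rle_lt_or_eq_dec _ _ H0); auto. exfalso; apply H; auto. }
assert (Hl0' : l0 <> 0) by lra.
assert (Hi0 : - eps < 0 < eps) by lra.
assert (dX : forall k t, (k < n)%nat -> - eps < t < eps -> is_derive (Xf P k) t (DXf P k t)).
{ intros k t Hk Ht. apply Derive_correct. apply (HC2 k Hk). auto. }
assert (dY : forall k t, (k < n)%nat -> - eps < t < eps -> is_derive (Yf P k) t (DYf P k t)).
{ intros k t Hk Ht. apply Derive_correct. apply (HC2 k Hk). auto. }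
assert (ddX : forall k, (k < n)%nat -> is_derive (DXf P k) 0 (Derive (DXf P k) 0)).
{ intros k Hk. apply Derive_correct. apply (HC2 k Hk). auto. }
assert (ddY : forall k, (k < n)%nat -> is_derive (DYf P k) 0 (Derive (DYf P k) 0)).
{ intros k Hk. apply Derive_correct. apply (HC2 k Hk). auto. }
assert (HQ : forall k t, (k < n)%nat -> - eps < t < eps -> 0 < Qf P n k t).
{ intros k t Hk Ht. destruct (Hcct t Ht) as [_ Hl]. specialize (Hl k Hk).
  rewrite len_eq in Hl by auto. unfold Qf, Xf, Yf.
  set (q := (fst (P t (next n k)) - fst (P t k)) * (fst (P t (next n k)) - fst (P t k)) +
     (snd (P t (next n k)) - snd (P t k)) * (snd (P t (next n k)) - snd (P t k))) in *.
  assert (0 <= q) by (unfold q; apply Rplus_le_le_0_compat; apply Rle_0_sqr).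
  destruct (Rle_lt_or_eq_dec _ _ H); auto. rewrite <- e in Hl. rewrite sqrt_0 in Hl. lra. }
assert (Lext : forall t, Length n (P t) = fsum n (fun k => sqrt (Qf P n k t))).
{ intros t. unfold Length. apply fsum_ext. intros k Hk. rewrite len_eq by auto. reflexivity. }
set (G1 := fun t => fsum n (fun k => ((Xf P (next n k) t - Xf P k t) * (DXf P (next n k) t - DXf P k t)
   + (Yf P (next n k) t - Yf P k t) * (DYf P (next n k) t - DYf P k t)) / sqrt (Qf P n k t))).
assert (dL : forall t, - eps < t < eps -> is_derive (fun t => fsum n (fun k => sqrt (Qf P n k t))) t (G1 t)).
{ intros t Ht. unfold G1. apply (is_derive_fsum (fun k t => sqrt (Qf P n k t))). intros k Hk.
  pose proof (next_lt n k Hn0). pose proof (HQ k t Hk Ht). unfold Qf in *.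
  apply edge_d1; auto. }
set (sec := fun k =>
  ((DXf P (next n k) 0 - DXf P k 0) * (DXf P (next n k) 0 - DXf P k 0)
   + (Xf P (next n k) 0 - Xf P k 0) * (Derive (DXf P (next n k)) 0 - Derive (DXf P k) 0)
   + (DYf P (next n k) 0 - DYf P k 0) * (DYf P (next n k) 0 - DYf P k 0)
   + (Yf P (next n k) 0 - Yf P k 0) * (Derive (DYf P (next n k)) 0 - Derive (DYf P k) 0))
   / sqrt (Qf P n k 0)
  - ((Xf P (next n k) 0 - Xf P k 0) * (DXf P (next n k) 0 - DXf P k 0)
     + (Yf P (next n k) 0 - Yf P k 0) * (DYf P (next n k) 0 - DYf P k 0))
   * ((Xf P (next n k) 0 - Xf P k 0) * (DXf P (next n k) 0 - DXf P k 0)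
     + (Yf P (next n k) 0 - Yf P k 0) * (DYf P (next n k) 0 - DYf P k 0))
   / (sqrt (Qf P n k 0))^3).
assert (E2 : Derive_n (fun t => Length n (P t)) 2 0 = fsum n sec).
{ rewrite (Derive_n_ext _ _ 2 0 Lext).
  change (Derive (fun t => Derive (fun s => fsum n (fun k => sqrt (Qf P n k s))) t) 0 = fsum n sec).
  rewrite (Derive_ext_loc _ G1 0).
  2: { eapply filter_imp; [| apply (loc_int eps Heps)]. intros t Ht. apply is_derive_unique. auto. }
  apply is_derive_unique. unfold G1, sec.
  apply (is_derive_fsum (fun k t => ((Xf P (next n k) t - Xf P k t) * (DXf P (next n k) t - DXf P k t)
   + (Yf P (next n k) t - Yf P k t) * (DYf P (next n k) t - DYf P k t)) / sqrt (Qf P n k t))).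
  intros k Hk. pose proof (next_lt n k Hn0). pose proof (HQ k 0 Hk Hi0). unfold Qf in *.
  apply edge_d2; auto. }
set (Vp := fun t => fsum n (fun k => Yf P k t * Xf P (next n k) t - Xf P k t * Yf P (next n k) t)).
assert (HVp : forall t, - eps < t < eps -> Vp t = Vp 0).
{ intros t Ht. pose proof (HVol t Ht) as HV.
  rewrite (vol_eq sigma n (P t) Hsg (proj2 (Hcct t Ht))) in HV.
  rewrite (vol_eq sigma n (P 0) Hsg (proj2 (Hcct 0 Hi0))) in HV.
  unfold Vp, Xf, Yf. destruct Hsg as [-> | ->]; lra. }
set (V1 := fun t => fsum n (fun k => DYf P k t * Xf P (next n k) t + Yf P k t * DXf P (next n k) t
   - (DXf P k t * Yf P (next n k) t + Xf P k t * DYf P (next n k) t))).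
assert (HV1 : forall t, - eps < t < eps -> V1 t = 0).
{ intros t Ht.
  assert (A : is_derive Vp t (V1 t)).
  { unfold Vp, V1. apply (is_derive_fsum (fun k t => Yf P k t * Xf P (next n k) t - Xf P k t * Yf P (next n k) t)).
    intros k Hk. pose proof (next_lt n k Hn0). apply vol_d1; auto. }
  assert (B : is_derive Vp t 0).
  { apply (is_derive_ext_loc (fun _ => Vp 0)).
    - eapply filter_imp; [| apply (loc_int_t eps t Ht)]. intros s Hs. symmetry. apply HVp. auto.
    - apply (is_derive_const (K:=R_AbsRing) (V:=R_NormedModule)). }
  apply is_derive_unique in A. apply is_derive_unique in B. congruence. }
set (v2 := fun k =>
  Derive (DYf P k) 0 * Xf P (next n k) 0 + DYf P k 0 * DXf P (next n k) 0
  + (DYf P k 0 * DXf P (next n k) 0 + Yf P k 0 * Derive (DXf P (next n k)) 0)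
  - (Derive (DXf P k) 0 * Yf P (next n k) 0 + DXf P k 0 * DYf P (next n k) 0
     + (DXf P k 0 * DYf P (next n k) 0 + Xf P k 0 * Derive (DYf P (next n k)) 0))).
assert (E3 : fsum n v2 = 0).
{ assert (A : is_derive V1 0 (fsum n v2)).
  { unfold V1, v2. apply (is_derive_fsum (fun k t => DYf P k t * Xf P (next n k) t + Yf P k t * DXf P (next n k) t
   - (DXf P k t * Yf P (next n k) t + Xf P k t * DYf P (next n k) t))).
    intros k Hk. pose proof (next_lt n k Hn0). apply vol_d2; auto. }
  assert (B : is_derive V1 0 0).
  { apply (is_derive_ext_loc (fun _ => 0)).
    - eapply filter_imp; [| apply (loc_int eps Heps)]. intros s Hs. symmetry. apply HV1. auto.
    - apply (is_derive_const (K:=R_AbsRing) (V:=R_NormedModule)). }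
  apply is_derive_unique in A. apply is_derive_unique in B. congruence. }
destruct (half th0 Hth) as [HCp [Hcth [Hsth [Ht HSC]]]].
rewrite Ht in Hka |- *. subst kappa.
set (t := sin (th0/2) / cos (th0/2)) in *.
set (V := fun j => padd (pscal (psi j) (vnormal sigma n p th0 j)) (pscal (eta j) (vtangent sigma n p th0 j))).
assert (hx : forall j, (j < n)%nat -> Xf P j 0 = fst (p j)) by (intros j Hj; unfold Xf; rewrite HP0; auto).
assert (hy : forall j, (j < n)%nat -> Yf P j 0 = snd (p j)) by (intros j Hj; unfold Yf; rewrite HP0; auto).
assert (hdx : forall j, (j < n)%nat -> DXf P j 0 = fst (V j)) by (intros j Hj; apply (Hder j Hj)).
assert (hdy : forall j, (j < n)%nat -> DYf P j 0 = snd (V j)) by (intros j Hj; apply (Hder j Hj)).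
assert (hq : forall k, (k < n)%nat -> sqrt (Qf P n k 0) = l0).
{ intros k Hk. unfold Qf. rewrite !hx, !hy by (auto using next_lt). rewrite <- len_eq by auto. auto. }
set (K := 2 * t / l0 * sigma).
set (Hk := fun k =>
  ((fst (V (next n k)) - fst (V k))^2 + (snd (V (next n k)) - snd (V k))^2)/l0
  - ((fst (p (next n k)) - fst (p k)) * (fst (V (next n k)) - fst (V k))
     + (snd (p (next n k)) - snd (p k)) * (snd (V (next n k)) - snd (V k)))^2 / l0^3
  + K * (snd (V k) * fst (V (next n k)) - fst (V k) * snd (V (next n k)))).
set (G := fun j =>
  (fst (edge n p (prev n j)) / l0 + K/2 * snd (p (prev n j))) * Derive (DXf P j) 0
  + (snd (edge n p (prev n j)) / l0 - K/2 * fst (p (prev n j))) * Derive (DYf P j) 0).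
set (B := fun k =>
  (- (fst (p (next n k)) - fst (p k)) / l0 - K/2 * snd (p (next n k))) * Derive (DXf P k) 0
  + (- (snd (p (next n k)) - snd (p k)) / l0 + K/2 * fst (p (next n k))) * Derive (DYf P k) 0).
assert (Eper : forall k, (k < n)%nat -> sec k + 2 * t / l0 * sigma / 2 * v2 k = Hk k + G (next n k) + B k).
{ intros k Hk0. pose proof (next_lt n k Hn0) as Hnk.
  unfold sec, v2, Hk, G, B. rewrite prev_next by auto. rewrite edge_eq by auto. cbn [fst snd].
  rewrite (hq k Hk0), (hx k Hk0), (hx _ Hnk), (hy k Hk0), (hy _ Hnk), (hdx k Hk0), (hdx _ Hnk),
    (hdy k Hk0), (hdy _ Hnk).
  unfold K. field. auto. }
assert (GB : forall k, (k < n)%nat -> G k + B k = 0).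
{ intros k Hk0. pose proof (prev_lt n k Hn0) as Hpk.
  pose proof (Vform sigma n p l0 th0 psi eta k Hsg Hn Hk0 Hlen Hl0' Hth Hang) as VF.
  cbv beta zeta in VF. destruct VF as [_ [_ [_ [_ [E5 E6]]]]].
  unfold G, B. rewrite (edge_eq p n (prev n k)), next_prev in * by auto.
  rewrite (edge_eq p n k) in E5, E6 by auto. cbn [fst snd] in *.
    match type of E5 with ?L5 = 0 => match type of E6 with ?L6 = 0 =>
    transitivity (L5 * Derive (DXf P k) 0 + L6 * Derive (DYf P k) 0);
    [unfold K, t; field; split; auto; lra | rewrite E5, E6; ring] end end. }
set (c0 := 2 * t * (1 - t^2) / l0).
set (g := fun j => psi j * eta j).
match goal with |- ?A /\ _ => assert (Main : A) end.
{ rewrite E2.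
  transitivity (fsum n (fun k => sec k + 2 * t / l0 * sigma / 2 * v2 k)).
  { rewrite fsum_plus, fsum_scal, E3. ring. }
  rewrite (fsum_ext n _ (fun k => (Hk k + G (next n k)) + B k)) by exact Eper.
  rewrite fsum_plus, fsum_plus, fsum_next by auto.
  rewrite Rplus_assoc, <- fsum_plus, (fsum_zero n (fun k => G k + B k)) by exact GB.
  rewrite Rplus_0_r.
  match goal with |- _ = fsum n ?F =>
    rewrite (fsum_ext n Hk (fun k => F k + c0 * (g (next n k) - g k))) end.
  { rewrite fsum_plus, fsum_scal, fsum_tele by auto. ring. }
  intros k Hk0. pose proof (next_lt n k Hn0) as Hnk.
  pose proof (Vform sigma n p l0 th0 psi eta k Hsg Hn Hk0 Hlen Hl0' Hth Hang) as VF.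
  cbv beta zeta in VF. destruct VF as [V1e [V2e [V3e [V4e _]]]].
  assert (HQ0 := len_eq p n k Hk0). rewrite (Hlen k Hk0) in HQ0.
  rewrite (edge_eq p n k) in V1e, V2e, V3e, V4e by auto. cbn [fst snd] in *.
  unfold Hk, V. rewrite V1e, V2e, V3e, V4e.
  set (ex := fst (p (next n k)) - fst (p k)) in *.
  set (ey := snd (p (next n k)) - snd (p k)) in *.
  assert (Hab2 : ex * ex + ey * ey = l0 * l0).
  { rewrite HQ0. rewrite sqrt_sqrt; auto. apply Rplus_le_le_0_compat; apply Rle_0_sqr. }
  set (a := ex / l0) in *. set (b := ey / l0) in *.
  assert (Hab : a * a + b * b = 1).
  { unfold a, b. replace (ex / l0 * (ex / l0) + ey / l0 * (ey / l0)) with ((ex*ex+ey*ey)/(l0*l0)) by (field; auto).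
    rewrite Hab2. field. auto. }
  replace ex with (l0 * a) by (unfold a; field; auto).
  replace ey with (l0 * b) by (unfold b; field; auto).
  rewrite Hcore by auto.
  unfold dgrad, K, c0, g. rewrite (Nat.mod_small k) by auto.
  unfold t. assert (cos (th0/2) <> 0) by lra. destruct Hsg as [-> | ->]; field; auto. }
split; [exact Main|].
intros He. rewrite Main. rewrite part2 by auto. split; [reflexivity|]. apply part3; auto.
Qed.
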